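(* Let $S\in\mathbb{R}^{q\times q}$ be unknown, have no eigenvalues with negative real part, and have all entries bounded by $|S_{ij}|\le\epsilon$ for a known $\epsilon>0$. Let $\mathcal{G}$ be a directed weighted graph on nodes $\mathbf{v}_0$ (leader), $\mathbf{v}_1,\dots,\mathbf{v}_N$ (followers) with nonnegative weights $a_{ij}$, containing a directed spanning tree rooted at $\mathbf{v}_0$, whose Laplacian $\mathcal{L}$ has every nonzero entry satisfying $\varepsilon_1\le|\mathcal{L}_{ij}|\le\varepsilon_2$ for constants $0<\varepsilon_1\le\varepsilon_2$. Let $H\in\mathbb{R}^{N\times N}$ be given by $H_{ii}=\sum_{j=0,\,j\neq i}^{N}a_{ij}$ and $H_{ij}=-a_{ij}$ ($i\neq j$, $i,j\ge1$). If $\mu>\dfrac{q\epsilon N(2\varepsilon_2)^{N-1}}{\varepsilon_1^{N}}$, then $(I_N\otimes S)-\mu(H\otimes I_q)$ is Hurwitz.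
   Context: The Laplacian is $\mathcal{L}=\mathcal{D}-\mathcal{A}$ with $\mathcal{A}=(a_{ij})$ ($a_{ij}>0$ iff $\mathbf{v}_i$ receives information from $\mathbf{v}_j$; the leader receives none) and $\mathcal{D}$ the diagonal in-degree matrix; $H$ is its follower block. Hurwitz means all eigenvalues have negative real part. *)

(* Defs.v *)
From HB Require Import structures.
From mathcomp Require Import all_boot all_order all_algebra.
From mathcomp Require Export complex mxtens.
Set Implicit Arguments. Unset Strict Implicit. Unset Printing Implicit Defensive.
Import Order.TTheory GRing.Theory Num.Theory.
Local Open Scope ring_scope.

Definition ceigenvalue (R : rcfType) (n : nat) (A : 'M[R]_n) (z : R[i]) : bool :=
  eigenvalue (map_mx (real_complex R) A) z.

Definition hurwitz (R : rcfType) (n : nat) (A : 'M[R]_n) : Prop :=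
  forall z : R[i], ceigenvalue A z -> complex.Re z < 0.

Definition no_neg_re_eig (R : rcfType) (n : nat) (A : 'M[R]_n) : Prop :=
  forall z : R[i], ceigenvalue A z -> 0 <= complex.Re z.

(* Graph on nodes 0 (leader), 1..N (followers), adjacency a : 'M_(N.+1),
   a i j > 0 iff v_i receives information from v_j (edge j -> i). *)
Definition in_degree (R : rcfType) (N : nat) (a : 'M[R]_N.+1) : 'M[R]_N.+1 :=
  diag_mx (\row_i \sum_(j < N.+1 | j != i) a i j).

Definition laplacian (R : rcfType) (N : nat) (a : 'M[R]_N.+1) : 'M[R]_N.+1 :=
  in_degree a - a.

Definition follower_block (R : rcfType) (N : nat) (a : 'M[R]_N.+1) : 'M[R]_N :=
  \matrix_(i < N, j < N) laplacian a (lift ord0 i) (lift ord0 j).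

Definition has_spanning_tree_from_leader (R : rcfType) (N : nat) (a : 'M[R]_N.+1) : Prop :=
  forall i : 'I_N.+1, connect (fun j i : 'I_N.+1 => 0 < a i j) ord0 i.

(* Main.v *)
Require Import Defs.
From HB Require Import structures.
From mathcomp Require Import all_boot all_order all_algebra.
From mathcomp Require Import complex mxtens.
From mathcomp Require Import ring lra.
Import Order.TTheory GRing.Theory Num.Theory.
Local Open Scope ring_scope.
Section ComplexPart.
Import ComplexField.Normc.
Local Open Scope complex_scope.

Section NormcLemmas.
Variable R : rcfType.
Implicit Types x y : R[i].

Lemma normc_ge0 x : 0 <= normc x.
Proof. by case: x => a b /=; rewrite sqrtr_ge0. Qed.

Lemma normc_real (r : R) : normc (r%:C) = `|r|.
Proof. by rewrite /= expr0n /= addr0 sqrtr_sqr. Qed.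

Lemma Re_le_normc x : `|complex.Re x| <= normc x.
Proof.
case: x => a b /=; rewrite -sqrtr_sqr ler_sqrt ?addr_ge0 ?sqr_ge0 //.
by rewrite lerDl sqr_ge0.
Qed.

Lemma normcD x y : normc (x + y) <= normc x + normc y.
Proof. exact: (@le_normcD R x y). Qed.

Lemma normc_sum (I : Type) (r : seq I) (P : pred I) (F : I -> R[i]) :
  normc (\sum_(j <- r | P j) F j) <= \sum_(j <- r | P j) normc (F j).
Proof.
elim/big_rec2: _ => [|j y1 y2 _ IH]; first by rewrite normc0.
by apply: le_trans (normcD _ _) _; rewrite lerD2l.
Qed.

End NormcLemmas.
Arguments normc_ge0 {R}. Arguments normc_real {R}. Arguments Re_le_normc {R}.
Arguments normcD {R}. Arguments normc_sum {R I}.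

Lemma tens_row (C : comPzRingType) m p n r (v : 'rV[C]_(m * p))
   (X : 'M[C]_(m,n)) (Y : 'M[C]_(p,r)) k l :
  (v *m (X *t Y)) 0 (mxtens_index (k,l)) =
  (X^T *m (\matrix_(i, j) v 0 (mxtens_index (i,j))) *m Y) k l.
Proof.
rewrite mxE (reindex (@mxtens_index m p)) /=; last first.
  by exists (@mxtens_unindex m p) => x _; [apply: mxtens_indexK | apply: mxtens_unindexK].
rewrite mxE.
under [RHS]eq_bigr do rewrite mxE mulr_suml.
rewrite exchange_big pair_big /=.
apply: eq_bigr => -[i j] _ /=; rewrite tensmxE !mxE.
by rewrite mulrA [_ * X i k]mulrC.
Qed.

Lemma sylvester (F : closedFieldType) n q (S : 'M[F]_q.+1) (T : 'M[F]_n.+1)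
  (V : 'M[F]_(n.+1, q.+1)) :
  V != 0 -> V *m S = T *m V -> exists s, eigenvalue S s /\ eigenvalue T s.
Proof.
move=> Vnz HVS.
have hp : forall p, V *m horner_mx S p = horner_mx T p *m V.
  elim/poly_ind => [|p c IH]; first by rewrite !rmorph0 mulmx0 mul0mx.
  rewrite !rmorphD !rmorphM /= !horner_mx_X !horner_mx_C -!mulmxE.
  rewrite mulmxDr mulmxDl mulmxA IH.
  rewrite -[horner_mx T p *m V *m S]mulmxA HVS mulmxA.
  by rewrite mul_mx_scalar mul_scalar_mx.
have := hp (char_poly S); rewrite Cayley_Hamilton mulmx0.
case: (closed_field_poly_normal (char_poly S)) => rs Hrs.
have Hcp : char_poly S = \prod_(z <- rs) ('X - z%:P).
  by rewrite {1}Hrs (monicP (char_poly_monic S)) scale1r.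
rewrite Hcp rmorph_prod /=.
have key : forall l : seq F, {subset l <= rs} ->
   0 = (\prod_(z <- l) horner_mx T ('X - z%:P)) *m V ->
   exists s, eigenvalue S s /\ eigenvalue T s.
  elim => [|s l IH] sub; first by rewrite big_nil mul1mx => /esym/eqP; rewrite (negbTE Vnz).
  rewrite big_cons -mulmxE -mulmxA.
  case: (boolP (eigenvalue T s)) => hT.
    move=> _; exists s; split => //.
    rewrite eigenvalue_root_char Hcp root_prod_XsubC; apply: sub.
    by rewrite mem_head.
  have hu : horner_mx T ('X - s%:P) \in unitmx.
    rewrite rmorphB /= horner_mx_X horner_mx_C -row_free_unit -kermx_eq0.
    by move: hT; rewrite /eigenvalue /eigenspace negbK.
  move=> E; apply: IH.
    by move=> x hx; apply: sub; rewrite inE hx orbT.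
  by rewrite -[RHS](mulKmx hu) -E mulmx0.
by apply: key.
Qed.

Lemma Sbound (R : rcfType) q (S : 'M[R]_q) eps (s : R[i]) :
  (forall i j, `|S i j| <= eps) -> eigenvalue (map_mx (real_complex R) S) s ->
  complex.Re s <= q%:R * eps.
Proof.
move=> hS /eigenvalueP [u Hu unz].
set U := \sum_(i < q) normc (u 0 i).
have U0 : 0 < U.
  rewrite lt_def sumr_ge0 ?andbT => [|i _]; last exact: normc_ge0.
  apply: contra unz => /eqP /psumr_eq0P H; apply/eqP/rowP => j.
  by rewrite mxE; apply: eq0_normc; apply: H => // i _; apply: normc_ge0.
have hj : forall j, normc s * normc (u 0 j) <= eps * U.
  move=> j; have := Hu; move/rowP/(_ j); rewrite !mxE => E.
  rewrite -normcM -E; apply: le_trans; first exact: normc_sum.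
  rewrite /U mulr_sumr; apply: ler_sum => i _.
  rewrite normcM mxE normc_real [eps * _]mulrC; apply: ler_wpM2l; first exact: normc_ge0.
  exact: hS.
have : normc s * U <= q%:R * eps * U.
  apply: (@le_trans _ _ (\sum_(j < q) eps * U)).
    by rewrite mulr_sumr; apply: ler_sum => j _; apply: hj.
  rewrite sumr_const card_ord -mulr_natl.
  by rewrite mulr1 -mulrA mulr_natl.
rewrite ler_pM2r // => h.
move: (Re_le_normc s) (ler_norm (complex.Re s)) h; lra.
Qed.

Lemma Hbound (R : rcfType) n (H : 'M[R]_n.+1) (x : 'I_n.+1 -> R) (c Xm : R)
  (w : 'cV[R[i]]_n.+1) (l : R[i]) :
 (forall i j, i != j -> H i j <= 0) -> (forall i, 0 < x i) -> (forall i, x i <= Xm) ->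
 (forall i, c <= \sum_j H i j * x j) -> 0 < c ->
 w != 0 -> map_mx (real_complex R) H *m w = l *: w -> c / Xm <= complex.Re l.
Proof.
move=> Hoff xpos xle hc c0 wnz Hw.
pose f := fun i => normc (w i 0) / x i.
case: (@arg_maxP _ _ _ ord0 xpredT f isT) => i _ Hmax.
have wj : forall j, normc (w j 0) <= f i * x j.
  move=> j; move: (Hmax j isT).
  have -> : f j = normc (w j 0) / x j by [].
  by move=> h; rewrite -ler_pdivrMr.
have m0 : 0 < f i.
  rewrite lt_def divr_ge0 ?normc_ge0 ?ltW ?xpos // andbT.
  apply: contra wnz => /eqP h; apply/eqP/colP => j; rewrite mxE.
  apply: eq0_normc; apply: le_anti; rewrite normc_ge0 andbT.
  by have := wj j; rewrite h mul0r.
have := Hw; move/colP/(_ i); rewrite !mxE.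
under eq_bigr do rewrite mxE.
rewrite (bigD1 i) //= => E.
have E2 : (l - (H i i)%:C) * w i 0 = \sum_(j | j != i) (H i j)%:C * w j 0.
  by rewrite mulrBl -E addrAC subrr add0r.
have B : normc (l - (H i i)%:C) * normc (w i 0) <= f i * (H i i * x i - c).
  rewrite -normcM E2; apply: le_trans; first exact: normc_sum.
  apply: (@le_trans _ _ (\sum_(j | j != i) f i * (- H i j * x j))).
    apply: ler_sum => j hj; rewrite normcM normc_real ler0_norm; last first.
      by apply: Hoff; rewrite eq_sym.
    rewrite mulrCA; apply: ler_wpM2l; last exact: wj.
    by rewrite oppr_ge0; apply: Hoff; rewrite eq_sym.
  rewrite -mulr_sumr; apply: ler_wpM2l; first exact: ltW.
  rewrite (eq_bigr (fun j => - (H i j * x j))); last by move=> j _; rewrite mulNr.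
  have := hc i; rewrite (bigD1 i) //=.
  rewrite sumrN; lra.
have wi : normc (w i 0) = f i * x i by rewrite /f divfK // gt_eqF.
rewrite wi mulrCA ler_pM2l // in B.
have ReE : complex.Re l = H i i + complex.Re (l - (H i i)%:C).
  by clear; case: l => a b /=; rewrite addrC subrK.
have := Re_le_normc (l - (H i i)%:C); rewrite ler_norml => /andP[h1 _].
have xi := xpos i; have xm := xle i.
have r1 : c <= complex.Re l * x i by nra.
have r0 : 0 < complex.Re l by nra.
rewrite ler_pdivrMr; last by lra.
nra.
Qed.

End ComplexPart.

Fixpoint reach (R : rcfType) N (a : 'M[R]_N.+1) (n : nat) : {set 'I_N.+1} :=
  if n is n'.+1 then reach R N a n' :|: [set i | [exists j in reach R N a n', 0 < a i j]]
  else [set ord0].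
Arguments reach {R N}.

Lemma reach_path (R : rcfType) N (a : 'M[R]_N.+1) k x p :
  x \in reach a k -> path (fun j i : 'I_N.+1 => 0 < a i j) x p ->
  last x p \in reach a (k + size p).
Proof.
elim: p x k => [|y p IH] x k /=; first by rewrite addn0.
move=> hx /andP[hxy hp]; rewrite addnS -addSn; apply: IH hp.
rewrite /= in_setU; apply/orP; right; rewrite inE; apply/existsP; exists x.
by rewrite hx hxy.
Qed.

Lemma depth_exists (R : rcfType) N (a : 'M[R]_N.+1) :
  has_spanning_tree_from_leader a -> forall i, exists2 n, (n <= N)%N & i \in reach a n.
Proof.
move=> hst i; case/connectP: (hst i) => p hp ->.
case: (shortenP hp) => p' hp' hu _.
exists (size p').
  have := max_card (mem (ord0 :: p')); rewrite card_ord (card_uniqP hu) /=.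
  by [].
have := @reach_path R N a 0 ord0 p'; rewrite add0n; apply => //.
by rewrite /= in_set1.
Qed.

Arguments depth_exists {R N a}.

Lemma lapE (R : rcfType) N (a : 'M[R]_N.+1) u v :
  laplacian a u v = (u == v)%:R * (\sum_(j < N.+1 | j != u) a u j) - a u v.
Proof. by rewrite /laplacian /in_degree !mxE mulr_natl. Qed.

Lemma lapsum (R : rcfType) N (a : 'M[R]_N.+1) (u : 'I_N.+1) (g : 'I_N.+1 -> R) :
  a u u = 0 ->
  \sum_k laplacian a u k * g k = \sum_k a u k * (g u - g k).
Proof.
move=> auu.
under eq_bigr do rewrite lapE.
rewrite (bigD1 u) //= [RHS](bigD1 u) //= eqxx auu subrr mulr0 subr0 mul1r add0r.
rewrite big_distrl /= -big_split /=; apply: eq_bigr => k hk.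
by rewrite eq_sym (negbTE hk) mul0r sub0r mulrBr mulNr addrC.
Qed.

Lemma graph_vec (R : rcfType) N (a : 'M[R]_N.+1) (eps1 eps2 : R) :
  (forall i j, 0 <= a i j) -> (forall i, a i i = 0) -> has_spanning_tree_from_leader a ->
  0 < eps1 -> eps1 <= eps2 ->
  (forall i j, laplacian a i j != 0 -> eps1 <= `|laplacian a i j| <= eps2) ->
  exists x : 'I_N -> R, (forall i, 0 < x i) /\
     (forall i, x i <= 1 - (eps1 / (eps1 + eps2)) ^+ N) /\
     (forall i, eps2 * (eps1 / (eps1 + eps2)) ^+ N <= \sum_j follower_block a i j * x j).
Proof.
move=> a0 aii hst e1 e12 hL.
set y := eps1 / (eps1 + eps2).
have ex : forall i, exists n, i \in reach a n.
  by move=> i; case: (depth_exists hst i) => n _ h; exists n.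
pose d i := ex_minn (ex i).
have dN : forall i, (d i <= N)%N.
  move=> i; rewrite /d; case: (ex_minnP (ex i)) => m _ hmin.
  by case: (depth_exists hst i) => n hn hi; apply: leq_trans (hmin _ hi) hn.
have d0 : d ord0 = 0%N.
  rewrite /d; case: (ex_minnP (ex ord0)) => m _ hmin.
  by apply/eqP; rewrite -leqn0; apply: hmin; rewrite /= in_set1.
have dpar : forall i, i != ord0 -> exists2 p, 0 < a i p & (d p < d i)%N.
  move=> i hi; rewrite {2}/d; case: (ex_minnP (ex i)) => m him hmin.
  case: m him hmin => [|k] him hmin.
    by rewrite /= in_set1 (negbTE hi) in him.
  move: him; rewrite /= in_setU => /orP[hk|].
    by have := hmin _ hk; rewrite ltnn.
  rewrite inE => /existsP [j /andP [hj aij]]; exists j => //.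
  rewrite /d; case: (ex_minnP (ex j)) => m' _ hmin'.
  exact: leq_ltn_trans (hmin' _ hj) (ltnSn k).
have s0 : 0 < eps1 + eps2 by lra.
have y0 : 0 < y by rewrite /y divr_gt0 //; lra.
have y1 : y < 1 by rewrite /y ltr_pdivrMr //; lra.
have ye : eps1 = (eps1 + eps2) * y by rewrite /y mulrC divfK // gt_eqF.
pose xx (k : 'I_N.+1) := 1 - y ^+ d k.
have xx0 : xx ord0 = 0 by rewrite /xx d0 expr0 subrr.
exists (fun i => xx (lift ord0 i)); split; last split.
- move=> i; rewrite /xx subr_gt0.
  have [p _ hp] := dpar (lift ord0 i) ltac:(by rewrite eq_sym neq_lift).
  move: hp; case: (d (lift ord0 i)) => // k _.
  rewrite exprS; apply: (le_lt_trans _ y1).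
  rewrite -[leRHS]mulr1; apply: ler_wpM2l; first exact: ltW.
  exact: exprn_ile1 (ltW y0) (ltW y1).
- move=> i; rewrite /xx lerD2l lerN2.
  by apply: ler_wiXn2l; [exact: ltW | exact: ltW | exact: dN].
move=> i.
set u := lift ord0 i.
have -> : \sum_j follower_block a i j * xx (lift ord0 j) =
          \sum_k laplacian a u k * xx k.
  by rewrite [RHS]big_ord_recl xx0 mulr0 add0r; apply: eq_bigr => j _; rewrite mxE.
rewrite lapsum //.
have [p aup hp] := dpar u ltac:(by rewrite eq_sym neq_lift).
have hup : u != p by apply: contraTneq aup => ->; rewrite aii ltxx.
set D := \sum_k a u k.
have DE : D = \sum_(k < N.+1 | k != u) a u k by rewrite /D (bigD1 u) //= aii add0r.
have LuuE : laplacian a u u = D by rewrite lapE eqxx mul1r aii subr0 DE.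
have LupE : laplacian a u p = - a u p by rewrite lapE (negbTE hup) mul0r sub0r.
have Dge : a u p <= D by rewrite /D (bigD1 p) //= lerDl sumr_ge0.
have De2 : D <= eps2.
  have : laplacian a u u != 0 by rewrite LuuE; apply: lt0r_neq0; lra.
  move/hL; rewrite LuuE ger0_norm; last by lra.
  by case/andP.
have Ae1 : eps1 <= a u p.
  have : laplacian a u p != 0 by rewrite LupE oppr_eq0 lt0r_neq0.
  by move/hL; rewrite LupE normrN ger0_norm ?(ltW aup) //; case/andP.
have -> : \sum_k a u k * (xx u - xx k) =
    \sum_k a u k * (y ^+ d k - y ^+ N) + D * (y ^+ N - y ^+ d u).
  rewrite /D big_distrl -big_split /=; apply: eq_bigr => k _.
  by rewrite /xx -mulrDr; congr (_ * _); lra.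
have S1 : a u p * (y ^+ d p - y ^+ N) <= \sum_k a u k * (y ^+ d k - y ^+ N).
  rewrite (bigD1 p) //= lerDl; apply: sumr_ge0 => k _; apply: mulr_ge0 => //.
  rewrite subr_ge0; apply: ler_wiXn2l; [exact: ltW | exact: ltW | exact: dN].
move: hp S1; case E: (d u) => [//|k] hp S1.
have yk0 : 0 <= y ^+ k by apply: exprn_ge0; exact: ltW.
have Qk : y ^+ k <= y ^+ d p by apply: ler_wiXn2l; [exact: ltW | exact: ltW | by []].
have YN : y ^+ N <= y ^+ k.+1.
  by apply: ler_wiXn2l; [exact: ltW | exact: ltW | rewrite -E; exact: dN].
rewrite exprS in YN *.
set Y := y ^+ N in YN S1 *; set P := y ^+ k in yk0 Qk YN *; set Q := y ^+ d p in Qk S1 *.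
have h1 : eps1 * (Q - Y) <= a u p * (Q - Y).
  apply: ler_wpM2r => //; nra.
have h2 : eps2 * (Y - y * P) <= D * (Y - y * P).
  nra.
nra.
Qed.

Lemma pow_diff (R : realFieldType) (b e : R) n : 0 <= b -> b <= e ->
  (b + e) ^+ n.+1 - b ^+ n.+1 <= n.+1%:R * e * (2 * e) ^+ n.
Proof.
move=> b0 be; elim: n => [|n IH]; first by rewrite !expr1 expr0; lra.
have e0 : 0 <= e by lra.
rewrite exprS [b ^+ n.+2]exprS [(2 * e) ^+ n.+1]exprS.
set X := (b + e) ^+ n.+1 in IH *; set Y := b ^+ n.+1 in IH *.
set Z := (2 * e) ^+ n in IH *.
have Z0 : 0 <= Z by rewrite exprn_ge0 //; lra.
have hY : Y <= 2 * e * Z.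
  rewrite /Y /Z -exprS; apply: lerXn2r; rewrite ?nnegrE //; lra.
set W := n.+1%:R * e * Z in IH *.
have W0 : 0 <= W by rewrite /W !mulr_ge0 ?ler0n.
have h1 : (b + e) * (X - Y) <= (b + e) * W by apply: ler_wpM2l => //; lra.
have h2 : (b + e) * W <= 2 * e * W by apply: ler_wpM2r => //; lra.
have h3 : b * Y <= e * Y by apply: ler_wpM2r => //; rewrite /Y exprn_ge0.
have -> : n.+2%:R * e * (2 * e * Z) = 2 * e * W + e * (2 * e * Z).
  by rewrite /W -addn1 natrD; ring.
have h4 : e * Y <= e * (2 * e * Z) by apply: ler_wpM2l.
have -> : (b + e) * X - b * Y = (b + e) * (X - Y) + e * Y - b * Y + b * Y.
  by ring.
lra.
Qed.

Lemma hurwitz0 (R : rcfType) m (A : 'M[R]_m) : m = 0%N -> hurwitz A.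
Proof.
move=> hm z /eigenvalueP [v _ vnz]; case/negP: vnz; apply/eqP/rowP => j.
by have := ltn_ord j; rewrite {2}hm.
Qed.

Theorem proposition1 (R : rcfType) (q N : nat) (S : 'M[R]_q) (eps : R)
    (a : 'M[R]_N.+1) (eps1 eps2 mu : R) :
  0 < eps ->
  no_neg_re_eig S ->
  (forall i j, `|S i j| <= eps) ->
  (forall i j, 0 <= a i j) ->
  (forall i, a i i = 0) ->
  (forall j, a ord0 j = 0) ->
  has_spanning_tree_from_leader a ->
  0 < eps1 -> eps1 <= eps2 ->
  (forall i j, laplacian a i j != 0 ->
     eps1 <= `|laplacian a i j| <= eps2) ->
  mu > q%:R * eps * N%:R * (2 * eps2) ^+ N.-1 / eps1 ^+ N ->
  hurwitz ((1%:M : 'M[R]_N) *t S - mu *: (follower_block a *t (1%:M : 'M[R]_q))).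
Proof.
case: N a => [|n] a; first by intros; apply: hurwitz0; rewrite mul0n.
case: q S => [|q] S; first by intros; apply: hurwitz0; rewrite muln0.
move=> eps0 _ hS a0 aii _ hst e1 e12 hL hmu z /eigenvalueP [v Hv vnz].
set f := real_complex R in Hv.
set Hm := follower_block a in Hv.
rewrite map_mxB map_mxZ !map_mxT !map_mx1 in Hv.
set Sc := map_mx f S in Hv.
set Hc := map_mx f Hm in Hv.
pose V := \matrix_(i, j) v 0 (mxtens_index (i, j)) : 'M_(n.+1, q.+1).
have HV : V *m Sc = (z%:M + f mu *: Hc^T) *m V.
  apply/matrixP => k l.
  have := Hv; move/rowP/(_ (mxtens_index (k,l))).
  rewrite mulmxBr -scalemxAr mxE [X in _ + X = _]mxE [X in _ - X = _]mxE.
  rewrite !tens_row trmx1 mul1mx mulmx1 [X in _ = X]mxE -/V => E.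
  rewrite mulmxDl mul_scalar_mx -scalemxAl.
  rewrite [in RHS]mxE [X in _ = X + _]mxE [X in _ = _ + X]mxE [V k l]mxE.
  rewrite -E.
  by rewrite subrK.
have Vnz : V != 0.
  apply: contra vnz => /eqP V0; apply/eqP/rowP => k; rewrite mxE.
  case: (mxtens_indexP k) => i j.
  by move/matrixP: V0 => /(_ i j); rewrite !mxE.
have [s [hs hT]] := @sylvester _ _ _ _ _ _ Vnz HV.
have Res : complex.Re s <= q.+1%:R * eps := @Sbound _ _ _ _ _ hS hs.
case/eigenvalueP: hT => u Hu unz.
have mu0 : 0 < mu.
  apply: le_lt_trans hmu.
  have p2 : 0 <= 2 * eps2 by lra.
  have p1 : 0 <= eps1 by lra.
  have p0 : 0 <= eps by lra.
  apply: divr_ge0; last exact: exprn_ge0.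
  apply: mulr_ge0; last exact: exprn_ge0.
  apply: mulr_ge0; last exact: ler0n.
  by apply: mulr_ge0; first exact: ler0n.
have fmu : f mu != 0 by apply/eqP => -[] /eqP; rewrite gt_eqF.
set lam := (s - z) / f mu.
have Hw : Hc *m u^T = lam *: u^T.
  rewrite mulmxDr mul_mx_scalar -scalemxAr in Hu.
  have H2 : f mu *: (u *m Hc^T) = (s - z) *: u.
    by rewrite scalerBl -Hu addrAC subrr add0r.
  have H3 : u *m Hc^T = lam *: u.
    by rewrite /lam mulrC -scalerA -H2 scalerA mulVf // scale1r.
  by rewrite -{1}(trmxK Hc) -trmx_mul H3 linearZ.
have wnz : u^T != 0 by rewrite trmx_eq0.
have [x [xpos [xle xsum]]] := @graph_vec _ _ _ _ _ a0 aii hst e1 e12 hL.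
have Hoff : forall i j, i != j -> Hm i j <= 0.
  move=> i j hij; rewrite /Hm mxE lapE (inj_eq lift_inj) (negbTE hij) mul0r sub0r.
  by rewrite oppr_le0.
set y := eps1 / (eps1 + eps2) in xle xsum.
have y0 : 0 < y by rewrite /y divr_gt0 //; lra.
have cpos : 0 < eps2 * y ^+ n.+1 by rewrite mulr_gt0 ?exprn_gt0 //; lra.
have Rl := @Hbound _ _ Hm x (eps2 * y ^+ n.+1) (1 - y ^+ n.+1) (u^T) lam
  Hoff xpos xle xsum cpos wnz Hw.
have zE : complex.Re z = complex.Re s - mu * complex.Re lam.
  have -> : z = s - f mu * lam.
    by rewrite /lam mulrC divfK // opprB addrC subrK.
  move: (lam) (s) => [c d] [a' b]; rewrite /f /=.
  by rewrite mul0r subr0.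
set K := n.+1%:R * (2 * eps2) ^+ n / eps1 ^+ n.+1.
set Q := q.+1%:R * eps.
have hmu' : Q * K < mu by move: hmu; rewrite /Q /K /= !mulrA.
have A0 : 0 < (eps1 + eps2) ^+ n.+1 by rewrite exprn_gt0 //; lra.
have B0 : 0 < eps1 ^+ n.+1 by rewrite exprn_gt0.
have hK : 1 - y ^+ n.+1 <= K * (eps2 * y ^+ n.+1).
  rewrite /y expr_div_n /K.
  set A := (eps1 + eps2) ^+ n.+1 in A0 *; set B := eps1 ^+ n.+1 in B0 *.
  have -> : n.+1%:R * (2 * eps2) ^+ n / B * (eps2 * (B / A)) =
      (n.+1%:R * eps2 * (2 * eps2) ^+ n) / A.
    by field; rewrite !gt_eqF.
  have -> : 1 - B / A = (A - B) / A by field; rewrite gt_eqF.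
  rewrite ler_pM2r ?invr_gt0 //; apply: pow_diff; lra.
have Xm0 : 0 < 1 - y ^+ n.+1 by have := xle ord0; have := xpos ord0; lra.
set r := eps2 * y ^+ n.+1 / (1 - y ^+ n.+1) in Rl.
have r0 : 0 < r by rewrite /r divr_gt0.
have hKr : 1 <= K * r.
  by rewrite /r mulrA ler_pdivlMr // mul1r.
have Q0 : 0 <= Q by rewrite /Q mulr_ge0 ?ler0n //; lra.
have t1 : mu * r <= mu * complex.Re lam by rewrite ler_wpM2l //; lra.
have t2 : Q * K * r < mu * r by rewrite ltr_pM2r.
have t3 : Q <= Q * (K * r) by rewrite ler_peMr.
have Res' : complex.Re s <= Q by [].
rewrite zE; clearbody r K Q lam; lra.
Qed.
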